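(* Let $\eta_3=\int_1^\infty\frac{\mathrm{d}t}{\sqrt{t^6-1}}$ and let $\mathrm{cleafh}_3:(-\eta_3,\eta_3)\to\mathbb{R}$ be the hyperbolic leaf function of basis $3$. For every $l\in(-\eta_3,\eta_3)$, writing $C=\mathrm{cleafh}_3(l)$, $$\Bigl(\mathrm{cleafh}_3\Bigl(\frac l2\Bigr)\Bigr)^2=\frac{-1+C^2+\sqrt3\sqrt{1+C^2+C^4}}{4C^2+2}+\frac{\sqrt3\,C\sqrt{-3-6C^2+2\sqrt3\,(1+2C^2)\sqrt{1+C^2+C^4}}}{2(1+2C^2)^{3/2}}.$$
   Context: For a natural number $n$, let $\eta_n=\int_1^\infty\frac{\mathrm{d}t}{\sqrt{t^{2n}-1}}$. The hyperbolic leaf function $\mathrm{cleafh}_n$ is the solution $r(l)$ on $(-\eta_n,\eta_n)$ of $\frac{\mathrm{d}^2r}{\mathrm{d}l^2}=n\,r^{2n-1}$ with $r(0)=1$, $r'(0)=0$; it is even, and for $l\ge0$ it is the inverse of $r\mapsto\int_1^r\frac{\mathrm{d}t}{\sqrt{t^{2n}-1}}$, $r\ge1$. *)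

(* Defs.v *)
From Stdlib Require Import Reals.
From Coquelicot Require Import Coquelicot.
Open Scope R_scope.

Definition eta (n : nat) : R :=
  RInt_gen (fun t => / sqrt (t ^ (2 * n) - 1)) (at_right 1) (Rbar_locally p_infty).

Definition is_cleafh (n : nat) (r : R -> R) : Prop :=
  exists dr : R -> R,
    (forall l, - eta n < l < eta n ->
        is_derive r l (dr l) /\ is_derive dr l (INR n * r l ^ (2 * n - 1))) /\
    r 0 = 1 /\ dr 0 = 0.

(* Main.v *)
Require Import Defs.
From Stdlib Require Import Reals Lra Psatz.
From Coquelicot Require Import Coquelicot.
Open Scope R_scope.

Lemma const_deriv (f : R -> R) a b :
  (forall x, Rmin a b <= x <= Rmax a b -> is_derive f x 0) -> f a = f b.
Proof.
intros H.
destruct (MVT_gen f a b (fun _ => 0)) as [c [_ Hc]].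
- intros x Hx; apply H; lra.
- intros x Hx; apply continuity_pt_filterlim; apply (@ex_derive_continuous R_AbsRing R_NormedModule f x).
  exists 0; apply H; auto.
- lra.
Qed.

Lemma final_alg (C X : R) : 1 <= C -> 1 <= X ->
  (2*X^2+2*X-1)^2 - C^2*(-8*X^4+8*X^3+8*X+1) = 0 ->
  X = (-1 + C ^ 2 + sqrt 3 * sqrt (1 + C ^ 2 + C ^ 4)) / (4 * C ^ 2 + 2)
    + sqrt 3 * C
        * sqrt (-3 - 6 * C ^ 2 + 2 * sqrt 3 * (1 + 2 * C ^ 2) * sqrt (1 + C ^ 2 + C ^ 4))
      / (2 * Rpower (1 + 2 * C ^ 2) (3 / 2)).
Proof.
intros HC HX HP.
set (u := 1 + 2*C^2).
assert (Hu : 1 <= u) by (unfold u; nra).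
assert (Hq : sqrt 3 * sqrt 3 = 3) by (apply sqrt_sqrt; lra).
assert (Hq0 : 0 <= sqrt 3) by apply sqrt_pos.
assert (HQ : sqrt (1 + C ^ 2 + C ^ 4) * sqrt (1 + C ^ 2 + C ^ 4) = 1 + C ^ 2 + C ^ 4)
  by (apply sqrt_sqrt; nra).
assert (HQ0 : 0 <= sqrt (1 + C ^ 2 + C ^ 4)) by apply sqrt_pos.
set (z := sqrt 3 * sqrt (1 + C ^ 2 + C ^ 4)).
assert (Hz2 : z^2 = 3 * (1 + C^2 + C^4)).
{ unfold z. replace ((sqrt 3 * sqrt (1 + C ^ 2 + C ^ 4))^2) with
   ((sqrt 3 * sqrt 3) * (sqrt (1 + C ^ 2 + C ^ 4) * sqrt (1 + C ^ 2 + C ^ 4))) by ring.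
  rewrite Hq, HQ; ring. }
assert (Hz0 : 0 <= z) by (unfold z; nra).
assert (HC2 : 1 <= C^2) by nra.
assert (HC4 : 1 <= C^4) by (replace (C^4) with (C^2*C^2) by ring; nra).
assert (Hz9 : 9 <= z^2) by (rewrite Hz2; lra).
assert (Hz3 : 3 <= z) by nra.
set (al := 2*u*X - C^2 + 1).
assert (Hprod : ((al - z)^2 - 3*C^2*(2*z-3)) * ((al + z)^2 + 3*C^2*(2*z+3)) = 0).
{ transitivity (4*u^3*((2*X^2+2*X-1)^2 - C^2*(-8*X^4+8*X^3+8*X+1))).
  2: rewrite HP; ring.
  set (Z := 3 * (1 + C^2 + C^4)) in Hz2.
  transitivity ((al^2 + z^2 + 9*C^2)^2 - (2*al+6*C^2)^2 * z^2). ring.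
  rewrite Hz2. unfold al, Z, u. ring. }
assert (Hneg : 0 < (al + z)^2 + 3*C^2*(2*z+3)).
{ assert (0 < 3*C^2*(2*z+3)) by (apply Rmult_lt_0_compat; lra). assert (0 <= (al+z)^2) by apply pow2_ge_0. lra. }
assert (HG : (al - z)^2 = 3*C^2*(2*z-3)).
{ apply Rmult_integral in Hprod. destruct Hprod; lra. }
assert (Hz_le : z <= 3 + 3*C^2).
{ destruct (Rle_lt_dec z (3+3*C^2)) as [h|h]; auto. exfalso.
  assert (h2 : (3+3*C^2)*(3+3*C^2) < z*z) by (apply Rmult_le_0_lt_compat; lra).
  assert (k : (3+3*C^2)*(3+3*C^2) - z*z = 6 + 15*C^2 + 6*C^4).
  { replace (z*z) with (z^2) by ring. rewrite Hz2. ring. }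
  lra. }
assert (Hal : 0 <= al - z).
{ assert (u * X >= u * 1) by (apply Rle_ge, Rmult_le_compat_l; lra).
  unfold al. unfold u in *. lra. }
assert (Hs : al - z = sqrt 3 * C * sqrt (2*z-3)).
{ rewrite <- (sqrt_pow2 (al - z)) by lra.
  rewrite HG. rewrite sqrt_mult by nra.
  rewrite sqrt_mult by nra. rewrite sqrt_pow2 by lra. ring. }
assert (Hrp : Rpower u (3/2) = u * sqrt u).
{ replace (3/2) with (1 + /2) by field.
  rewrite Rpower_plus, Rpower_1, Rpower_sqrt by lra. reflexivity. }
fold u. rewrite Hrp.
replace (-3 - 6 * C ^ 2 + 2 * sqrt 3 * u * sqrt (1 + C ^ 2 + C ^ 4)) with (u * (2*z-3))
  by (unfold z, u; ring).
rewrite sqrt_mult by nra.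
assert (Hsu : 0 < sqrt u) by (apply sqrt_lt_R0; lra).
replace (sqrt 3 * C * (sqrt u * sqrt (2 * z - 3))) with (sqrt u * (al - z)) by (rewrite Hs; ring).
fold z. unfold al. unfold u in *. field. split; nra.
Qed.
Ltac rwD H := match type of H with is_derive ?f ?x ?v =>
  replace (Derive (fun y => f y) x) with v by (symmetry; apply is_derive_unique; exact H) end.

Lemma W_derivs (r dr : R -> R) x :
  is_derive r x (dr x) -> is_derive dr x (3 * r x ^ 5) -> dr x ^ 2 = r x ^ 6 - 1 -> r x <> 0 ->
  is_derive (fun y => - / (r y ^ 2)) x (2 * dr x / r x ^ 3) /\
  is_derive (fun y => 2 * dr y / r y ^ 3) x (6 * (- / (r x ^ 2)) ^ 2).
Proof.
intros H1 H2 H3 H0.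
split.
- auto_derive.
  + repeat split; try (eexists; eauto); try (intro h; apply H0; nra); auto.
  + rwD H1. field; auto.
- auto_derive.
  + repeat split; try (eexists; eauto); try (intro h; apply H0; nra); auto.
  + rwD H1. rwD H2.
    transitivity (6 * (- / (r x ^ 2)) ^ 2 + (-6 / r x ^ 4) * (dr x ^ 2 - (r x ^ 6 - 1))).
    field; auto. rewrite H3. ring.
Qed.

Definition N0 a b := 2*a*b*(a+b) + 4 + 2*(a-b)^2.
Definition Mf a b := a*b + a + b - 2.
Definition Phi a b p q := -1 + 3*(N0 a b + p*q)/(2*(Mf a b)^2).

Lemma phi_deriv (W DW : R -> R) s t :
 is_derive W t (DW t) -> is_derive DW t (6*W t^2) -> is_derive W (s-t) (DW (s-t)) ->
 is_derive DW (s-t) (6*W (s-t)^2) -> DW t^2 = 4*W t^3+4 -> DW (s-t)^2 = 4*W(s-t)^3+4 ->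
 Mf (W t) (W (s-t)) <> 0 ->
 is_derive (fun y => Phi (W y) (W (s-y)) (DW y) (DW (s-y))) t 0.
Proof.
intros H1 H2 H3 H4 H5 H6 HM.
unfold Phi, N0, Mf. unfold Mf in HM.
auto_derive.
- replace (s + - t) with (s - t) by ring.
  repeat split; try (eexists; eauto); try (intro h; apply HM; nra); auto.
- replace (s + - t) with (s - t) by ring.
  rwD H1. rwD H2. rwD H3. rwD H4.
  set (a := W t) in *. set (b := W (s - t)) in *. set (p := DW t) in *. set (q := DW (s - t)) in *.
  transitivity (3/2 * (-2*(b+1)*q*(p^2-4*a^3-4) + 2*(a+1)*p*(q^2-4*b^3-4)) / (a*b+a+b-2)^3).
  field; auto.
  rewrite H5, H6. field; auto.
Qed.

Lemma Phi0 b q : Phi (-1) b 0 q = b.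
Proof. unfold Phi, N0, Mf. replace (-1 * b + -1 + b - 2) with (-3) by ring. field. Qed.

Lemma ge1_3 (y : R) : 0 <= y -> 1 <= y ^ 3 -> 1 <= y.
Proof.
intros H0 H1. destruct (Rlt_le_dec y 1) as [h|h]; auto. exfalso.
assert (y*y <= y) by nra. assert (y*y*y <= y*y) by nra.
replace (y^3) with (y*y*y) in H1 by ring. lra.
Qed.

Theorem mainTheorem17 (r : R -> R) (Hr : is_cleafh 3 r) (l : R)
  (Hl : - eta 3 < l < eta 3) :
  let C := r l in
  (r (l / 2)) ^ 2 =
    (-1 + C ^ 2 + sqrt 3 * sqrt (1 + C ^ 2 + C ^ 4)) / (4 * C ^ 2 + 2)
    + sqrt 3 * C
        * sqrt (-3 - 6 * C ^ 2 + 2 * sqrt 3 * (1 + 2 * C ^ 2) * sqrt (1 + C ^ 2 + C ^ 4))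
      / (2 * Rpower (1 + 2 * C ^ 2) (3 / 2)).
Proof.
intros C.
destruct Hr as [dr [Hd [H0 Hd0]]].
set (e := eta 3) in *.
assert (He : 0 < e) by lra.
assert (HD : forall x, -e < x < e -> is_derive r x (dr x) /\ is_derive dr x (3 * r x ^ 5)).
{ intros x Hx. destruct (Hd x Hx) as [h1 h2]. split; auto.
  replace (3 * r x ^ 5) with (INR 3 * r x ^ (2*3-1)) by (simpl; ring). exact h2. }
assert (Hint : forall x y, -e < x < e -> Rmin 0 x <= y <= Rmax 0 x -> -e < y < e).
{ intros x y Hx Hy. unfold Rmin, Rmax in Hy. destruct (Rle_dec 0 x); lra. }
assert (HE : forall x, -e < x < e -> dr x ^ 2 = r x ^ 6 - 1).
{ intros x Hx.
  assert (K : (fun y => dr y ^ 2 - r y ^ 6 + 1) 0 = (fun y => dr y ^ 2 - r y ^ 6 + 1) x).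
  { apply (const_deriv (fun y => dr y ^ 2 - r y ^ 6 + 1) 0 x). intros y Hy. destruct (HD y (Hint x y Hx Hy)) as [h1 h2].
    auto_derive.
    - repeat split; try (eexists; eauto); auto.
    - rwD h1. rwD h2. ring. }
  cbv beta in K. rewrite H0, Hd0 in K.
  assert (0 ^ 2 - 1 ^ 6 + 1 = 0) by ring. lra. }
assert (Hr6 : forall x, -e < x < e -> 1 <= r x ^ 6).
{ intros x Hx. specialize (HE x Hx). assert (0 <= dr x ^ 2) by apply pow2_ge_0. lra. }
assert (Hr2 : forall x, -e < x < e -> 1 <= r x ^ 2).
{ intros x Hx. apply ge1_3. apply pow2_ge_0. replace ((r x ^ 2) ^ 3) with (r x ^ 6) by ring. auto. }
assert (Hrn : forall x, -e < x < e -> r x <> 0).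
{ intros x Hx h. specialize (Hr2 x Hx). rewrite h in Hr2. simpl in Hr2. lra. }
assert (Hcont : forall x, -e < x < e -> continuity_pt r x).
{ intros x Hx. apply continuity_pt_filterlim.
  apply (@ex_derive_continuous R_AbsRing R_NormedModule r x).
  exists (dr x). apply (HD x Hx). }
assert (HC0 : 0 <= C).
{ unfold C. destruct (Rle_lt_dec 0 (r l)) as [h|h]; auto. exfalso.
  destruct (Rlt_le_dec 0 l) as [hl|hl].
  - destruct (Ranalysis5.IVT_interv (fun x => - r x) 0 l) as [z [hz1 hz2]].
    + intros a ha. apply (continuity_pt_opp r). apply Hcont. lra.
    + exact hl.
    + rewrite H0. lra.
    + lra.
    + apply (Hrn z). lra. lra.
  - destruct (Rle_lt_dec 0 l) as [hl'|hl'].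
    + assert (l = 0) by lra. subst l. rewrite H0 in h. lra.
    + destruct (Ranalysis5.IVT_interv r l 0) as [z [hz1 hz2]].
      * intros a ha. apply Hcont. lra.
      * exact hl'.
      * exact h.
      * rewrite H0. lra.
      * apply (Hrn z). lra. exact hz2. }
assert (HC1 : 1 <= C).
{ assert (1 <= C ^ 2) by (apply Hr2; auto). nra. }
pose (W := fun y => - / (r y ^ 2)).
pose (DW := fun y => 2 * dr y / r y ^ 3).
assert (HW : forall x, -e < x < e -> is_derive W x (DW x) /\ is_derive DW x (6 * W x ^ 2)).
{ intros x Hx. destruct (HD x Hx) as [h1 h2].
  apply (W_derivs r dr x h1 h2 (HE x Hx) (Hrn x Hx)). }
assert (HW2 : forall x, -e < x < e -> DW x ^ 2 = 4 * W x ^ 3 + 4).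
{ intros x Hx. unfold W, DW. specialize (Hrn x Hx).
  transitivity (4 * dr x ^ 2 / r x ^ 6). field; auto.
  rewrite (HE x Hx). field; auto. }
assert (HWr : forall x, -e < x < e -> -1 <= W x < 0).
{ intros x Hx. unfold W. specialize (Hr2 x Hx).
  assert (0 < / r x ^ 2) by (apply Rinv_0_lt_compat; lra).
  assert (/ r x ^ 2 <= / 1) by (apply Rinv_le_contravar; lra).
  rewrite Rinv_1 in *. lra. }
assert (K : (fun t => Phi (W t) (W (l - t)) (DW t) (DW (l - t))) 0 =
            (fun t => Phi (W t) (W (l - t)) (DW t) (DW (l - t))) (l / 2)).
{ apply (const_deriv (fun t => Phi (W t) (W (l - t)) (DW t) (DW (l - t))) 0 (l/2)). intros y Hy.
  assert (Hy1 : -e < y < e).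
  { apply (Hint l y Hl). unfold Rmin, Rmax in *.
    destruct (Rle_dec 0 (l/2)); destruct (Rle_dec 0 l); lra. }
  assert (Hy2 : -e < l - y < e).
  { apply (Hint l (l - y) Hl). unfold Rmin, Rmax in *.
    destruct (Rle_dec 0 (l/2)); destruct (Rle_dec 0 l); lra. }
  destruct (HW y Hy1) as [a1 a2]. destruct (HW (l - y) Hy2) as [b1 b2].
  apply phi_deriv; auto.
  unfold Mf. pose proof (HWr y Hy1). pose proof (HWr (l - y) Hy2).
  assert (0 <= (W y + 1) * (W (l - y) + 1)) by (apply Rmult_le_pos; lra).
  assert ((W y + 1) * (W (l - y) + 1) <= 1 * 1) by (apply Rmult_le_compat; lra).
  intro h. nra. }
cbv beta in K.
replace (l - 0) with l in K by ring.
replace (l - l / 2) with (l / 2) in K by field.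
assert (HW0 : W 0 = -1) by (unfold W; rewrite H0; field).
assert (HDW0 : DW 0 = 0) by (unfold DW; rewrite H0, Hd0; field).
rewrite HW0, HDW0, Phi0 in K.
assert (Hl2 : -e < l / 2 < e) by lra.
set (S := r (l / 2)) in *.
set (X := S ^ 2).
assert (HX : 1 <= X) by (apply Hr2; auto).
assert (HWl : W l = - / C ^ 2) by reflexivity.
assert (HWa : W (l / 2) = - / X) by reflexivity.
assert (Hp := HW2 (l / 2) Hl2).
set (a := W (l / 2)) in *. set (p := DW (l / 2)) in *.
unfold Phi, N0, Mf in K.
replace (p * p) with (4 * a ^ 3 + 4) in K by (rewrite <- Hp; ring).
assert (HP : (2*X^2+2*X-1)^2 - C^2*(-8*X^4+8*X^3+8*X+1) = 0).
{ rewrite HWl, HWa in K.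
  assert (HC : C <> 0) by lra.
  assert (HX0 : X <> 0) by lra.
  assert (HQ : 2*X^2+2*X-1 <> 0) by nra.
  transitivity (- C^2 * (2*X^2+2*X-1)^2 * ( (- / C ^ 2) -
     (-1 + 3 * (2 * (- / X) * (- / X) * ((- / X) + (- / X)) + 4 + 2 * ((- / X) - (- / X)) ^ 2 + (4 * (- / X) ^ 3 + 4)) /
        (2 * ((- / X) * (- / X) + (- / X) + (- / X) - 2) ^ 2)))).
  - field. repeat split; try assumption; nra.
  - rewrite K. ring. }
apply final_alg; auto.
Qed.
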